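(* Let $k\ge2$, let $f:(k+1)^V\to\mathbb R_{\ge0}$ be a $k$-submodular function, and run Algorithm 2 with parameters $d_a\ge\frac12$ for all $a\in[k]$. Then for every part $a\in[k]$, $$\sum_{t\in T_a}\big(3w_{t,a}-\beta_a^{(t-1)}\big)+2n_a\beta_a\ \le\ Q_a\sum_{t\in S_a}w_{t,a},\qquad Q_a=2(1+d_a)\Big(1+\frac{1}{(1+d_a/n_a)^{n_a}-1}\Big).$$
   Context: Let $V$ be a finite ground set and $k\ge1$ an integer; $[k]=\{1,\dots,k\}$. $(k+1)^V$ denotes the set of $k$-tuples $\mathbf X=(X_1,\dots,X_k)$ of pairwise disjoint subsets of $V$; $\mathrm{supp}(\mathbf X)=X_1\cup\dots\cup X_k$; $\mathbf X\preceq\mathbf Y$ means $X_a\subseteq Y_a$ for all $a$; $(\mathbf X\sqcap\mathbf Y)_a=X_a\cap Y_a$ and $(\mathbf X\sqcup\mathbf Y)_a=(X_a\cup Y_a)\setminus\bigcup_{b\neq a}(X_b\cup Y_b)$. A function $f:(k+1)^V\to\mathbb R_{\ge0}$ is $k$-submodular if $f(\mathbf X)+f(\mathbf Y)\ge f(\mathbf X\sqcap\mathbf Y)+f(\mathbf X\sqcup\mathbf Y)$ for all $\mathbf X,\mathbf Y\in(k+1)^V$. For $t\notin\mathrm{supp}(\mathbf X)$ and $a\in[k]$, $\Delta_{t,a}f(\mathbf X)=f(X_1,\dots,X_{a-1},X_a\cup\{t\},X_{a+1},\dots,X_k)-f(\mathbf X)$. Budgets are positive integers $n_1,\dots,n_k$.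 Algorithm 2. The elements of $V$ are labeled $1,\dots,m$ in arrival order. Given $d_a>0$, set $c_a=(1+d_a)/\big((1+d_a/n_a)^{n_a}-1\big)$ and $g_a(i)=\frac{c_a}{n_a}(1+d_a/n_a)^{i-1}$ for $i\in[n_a]$. Maintain $\mathbf S$, initially $(\emptyset,\dots,\emptyset)$, and thresholds $\beta_a=0$. For $t=1,\dots,m$: compute $w_{t,a}=\Delta_{t,a}f(\mathbf S)$ for all $a$; let $a$ be a part maximizing the modified discounted gain $w_{t,a}-\beta_a-\min_{a'\neq a}\beta_{a'}$; if this modified discounted gain is $\ge0$, then: if $|S_a|<n_a$ add $t$ to $S_a$, otherwise remove from $S_a$ an element $t'$ minimizing $w_{t',a}$ over $S_a$ and add $t$; then set $\beta_a=\sum_{i=1}^{n_a}w_a(i)g_a(i)$ where $w_a(i)$ is the $i$-th largest value in $\{w_{s,a}:s\in S_a\}$ ($0$ if $i>|S_a|$). Weights are never recomputed. Otherwise $t$ is discarded. Output the final $\mathbf S$. Notation: $\mathbf S^{(t)}$ and $\beta_a^{(t)}$ denote the values after processing element $t$ (with $\mathbf S^{(0)}$ empty and $\beta_a^{(0)}=0$), so $w_{t,a}=\Delta_{t,a}f(\mathbf S^{(t-1)})$; $\mathbf S$, $\beta_a$ without superscript are final values; $T_a=\bigcup_t S_a^{(t)}$ is the set of elements ever placed in part $a$. *)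

(* Defs.v *)
From HB Require Import structures.
From mathcomp Require Import all_boot all_order all_algebra.
Set Implicit Arguments. Unset Strict Implicit. Unset Printing Implicit Defensive.
Import Order.TTheory GRing.Theory Num.Theory.
Local Open Scope ring_scope.

Section Defs.
Variables (R : realFieldType) (m k : nat).

(* An element X of (k+1)^V, with V = 'I_m (elements 0..m-1 in arrival
   order): X x = Some a means x \in X_a, X x = None means x \notin supp X. *)
Definition assign := {ffun 'I_m -> option 'I_k}.

Definition part (X : assign) (a : 'I_k) : {set 'I_m} := [set x | X x == Some a].

Definition emptyA : assign := [ffun _ => None].

(* (X meet Y)_a = X_a \cap Y_a *)
Definition meetA (X Y : assign) : assign :=
  [ffun x => if X x == Y x then X x else None].

(* (X join Y)_a = (X_a \cup Y_a) \ \bigcup_{b<>a} (X_b \cup Y_b) *)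
Definition joinA (X Y : assign) : assign :=
  [ffun x => match X x, Y x with
             | None, o => o
             | o, None => o
             | Some a, Some b => if a == b then Some a else None
             end].

Definition k_submodular (f : assign -> R) :=
  forall X Y : assign, f (meetA X Y) + f (joinA X Y) <= f X + f Y.

Definition upd (X : assign) (t : 'I_m) (o : option 'I_k) : assign :=
  [ffun x => if x == t then o else X x].

Definition delta (f : assign -> R) (X : assign) (t : 'I_m) (a : 'I_k) : R :=
  f (upd X t (Some a)) - f X.

Definition c_par (n : 'I_k -> nat) (d : 'I_k -> R) (a : 'I_k) : R :=
  (1 + d a) / ((1 + d a / (n a)%:R) ^+ n a - 1).

(* g_a(i+1) (0-based index i) = c_a/n_a (1+d_a/n_a)^i *)
Definition g_par (n : 'I_k -> nat) (d : 'I_k -> R) (a : 'I_k) (i : nat) : R :=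
  c_par n d a / (n a)%:R * (1 + d a / (n a)%:R) ^+ i.

Definition Q_par (n : 'I_k -> nat) (d : 'I_k -> R) (a : 'I_k) : R :=
  2 * (1 + d a) * (1 + 1 / ((1 + d a / (n a)%:R) ^+ n a - 1)).

(* A run of the algorithm is a trace St : nat -> assign, St i being S^(i)
   (the state after the first i elements, i.e. elements 0..i-1, have been
   processed).  Weights: w_{t,a} = Delta_{t,a} f(S^(t-1)), i.e. computed
   from the state just before t arrives. *)
Definition wt (f : assign -> R) (St : nat -> assign) (t : 'I_m) (a : 'I_k) : R :=
  delta f (St (val t)) t a.

(* beta_a = sum_{i=1}^{n_a} w_a(i) g_a(i), w_a(i) the i-th largest value of
   the multiset {w_{s,a} : s in S_a} (0 if i > |S_a|). *)
Definition betaOf (w : 'I_m -> 'I_k -> R) (n : 'I_k -> nat) (d : 'I_k -> R)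
    (X : assign) (a : 'I_k) : R :=
  \sum_(i < n a)
     nth 0 (sort (fun x y : R => y <= x) [seq w s a | s <- enum (part X a)]) i
       * g_par n d a i.

(* min_{a' <> a} beta_{a'} (the sequence is nonempty when k >= 2, and then
   the default, being its head, is irrelevant) *)
Definition minOther (bet : 'I_k -> R) (a : 'I_k) : R :=
  let s := [seq bet a' | a' <- enum 'I_k & a' != a] in
  \big[Order.min/head 0 s]_(x <- s) x.

(* One step of Algorithm 2 on element t, from state S to state S'.
   All tie-breaking choices are allowed. *)
Definition step (f : assign -> R) (n : 'I_k -> nat) (d : 'I_k -> R)
    (St : nat -> assign) (t : 'I_m) : Prop :=
  let S := St (val t) in
  let S' := St (val t).+1 in
  let w := wt f St in
  let bet := betaOf w n d S in
  let gain := fun a => w t a - bet a - minOther bet a in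
  ((forall a, gain a < 0) /\ S' = S)
  \/ (exists a, (forall b, gain b <= gain a) /\ 0 <= gain a /\
       (((#|part S a| < n a)%N /\ S' = upd S t (Some a))
        \/ ((n a <= #|part S a|)%N /\
            exists t', t' \in part S a /\
              (forall s, s \in part S a -> w t' a <= w s a) /\
              S' = upd (upd S t' None) t (Some a)))).

Definition valid_run (f : assign -> R) (n : 'I_k -> nat) (d : 'I_k -> R)
    (St : nat -> assign) : Prop :=
  St 0%N = emptyA /\ forall t : 'I_m, step f n d St t.

Definition everIn (St : nat -> assign) (a : 'I_k) : {set 'I_m} :=
  [set t | [exists i : 'I_m.+1, St (val i) t == Some a]].

End Defs.

(* Main.v *)
Require Import Defs.
From HB Require Import structures.
From mathcomp Require Import all_boot all_order all_algebra.
From mathcomp Require Import ring lra.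
Import Order.TTheory GRing.Theory Num.Theory.
Local Open Scope ring_scope.


Lemma core_ineq (R : realFieldType) (k : nat) (n : 'I_k -> nat) (d : 'I_k -> R) (a : 'I_k)
  (x x' : nat -> R) (y : R) (j : nat) :
  (0 < n a)%N -> 1 / 2 <= d a -> (j < n a)%N ->
  (forall i, (i < j)%N -> y <= x i) ->
  (forall i, (i < n a)%N -> x' i = if (i < j)%N then x i else if i == j then y else x i.-1) ->
  \sum_(i < n a) x i * g_par n d a i <= y ->
  2 * (n a)%:R * \sum_(i < n a) x' i * g_par n d a i
    - (2 * (n a)%:R + 1) * \sum_(i < n a) x i * g_par n d a i
    + Q_par n d a * x (n a).-1 <= (Q_par n d a - 3) * y.
Proof.
move=> Npos hd hj hxj hx' hb.
rewrite /Q_par.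
rewrite /g_par /c_par in hb hx' *.
move: hb.
have [N' hN] : exists N', n a = N'.+1 by exists (n a).-1; rewrite prednK.
rewrite hN /= in hj hx' *.
set N := N'.+1 in hj hx' *.
set D := d a in hd *.
have NR : 0 < N%:R :> R by rewrite ltr0n.
have Dpos : 0 < D by apply: lt_le_trans hd; lra.
set r := 1 + D / N%:R.
have r1 : 1 < r by rewrite /r ltrDl divr_gt0.
set E := r ^+ N.
have E1 : 1 < E by rewrite /E exprn_egt1 // -lt0n.
have E1' : E - 1 != 0 by rewrite subr_eq0 gt_eqF.
set c := (1 + D) / (E - 1).
have cpos : 0 < c by rewrite /c divr_gt0 //; lra.
set g := fun i : nat => c / N%:R * r ^+ i.
rewrite -/(g _).
have gpos : forall i, 0 <= g i.
  move=> i; rewrite /g mulr_ge0 // ?divr_ge0 ?exprn_ge0 //; lra.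
have Nr : N%:R * r = N%:R + D.
  by rewrite /r; field; rewrite pnatr_eq0.
have gS : forall i, g i.+1 = r * g i by move=> i; rewrite /g exprS; ring.
have hQ : 2 * (1 + D) * (1 + 1 / (E - 1)) = 2 * (c * E).
  rewrite /c; field; exact: E1'.
have hQ3 : 2 * (1 + D) * (1 + 1 / (E - 1)) - 3 = 2 * c + 2 * D - 1.
  rewrite hQ /c; field; exact: E1'.
have hG : forall jj, D * \sum_(0 <= i < jj) g i = N%:R * g jj - c.
  elim=> [|jj IH]; first by rewrite big_geq // mulr0 /g expr0; field; rewrite pnatr_eq0.
  rewrite big_nat_recr //= mulrDr IH gS mulrA Nr; ring.
rewrite hQ3 hQ /=.
have cE : c * E = N%:R * r * g N'.
  rewrite /g /E exprS; field; rewrite pnatr_eq0 //.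
have eS : forall F : nat -> R, \sum_(i < N) F i * (c / N%:R * r ^+ i) = \sum_(0 <= i < N) F i * g i.
  by move=> F; rewrite big_mkord.
rewrite !eS.
have hjN : (j <= N')%N by [].
rewrite (big_cat_nat (leq0n j) (ltnW hj)) (big_cat_nat (leq0n j) (ltnW hj)) /=.
rewrite big_nat_recr //= big_nat_recl //=.
have e1 : \sum_(0 <= i < j) x' i * g i = \sum_(0 <= i < j) x i * g i.
  apply: eq_big_nat => i /andP[_ hi]; rewrite hx' ?hi //; exact: ltn_trans hi hj.
have e2 : \sum_(j <= i < N') x' i.+1 * g i.+1 = r * \sum_(j <= i < N') x i * g i.
  rewrite mulr_sumr; apply: eq_big_nat => i /andP[hi1 hi2].
  rewrite hx' // ifF; last by apply/negbTE; rewrite -leqNgt; exact: leqW.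
  rewrite ifF; last by apply/negbTE; rewrite neq_ltn ltnS hi1 orbT.
  by rewrite /= gS; ring.
have e3 : x' j = y by rewrite hx' // ltnn eqxx.
rewrite e1 e2 e3.
set A := \sum_(0 <= i < j) x i * g i.
set C := \sum_(j <= i < N') x i * g i.
set G := \sum_(0 <= i < j) g i.
move=> hb.
have hA : G * y <= A.
  rewrite /G /A mulr_suml; apply: ler_sum_nat => i /andP[_ hi].
  rewrite mulrC; apply: ler_wpM2r; [exact: gpos | exact: hxj].
have hdA : D * (G * y) <= D * A by apply: ler_wpM2l => //; lra.
have hB : (2 * D - 1) * (C + x N' * g N') <= (2 * D - 1) * (y - A).
  apply: ler_wpM2l; first lra. lra.
have eG : D * G * y = N%:R * g j * y - c * y by rewrite (hG j); ring.
have eC : N%:R * (r * C) = N%:R * C + D * C by rewrite mulrA Nr; ring.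
have eQ : N%:R * r * g N' * x N' = N%:R * g N' * x N' + D * g N' * x N' by rewrite Nr; ring.
rewrite cE.
nra.
Qed.


Section Lists.
Variable R : realFieldType.
Local Notation ge := (fun x y : R => y <= x).

Fixpoint ins (y : R) (L : seq R) : seq R :=
  if L is z :: L' then (if z <= y then y :: z :: L' else z :: ins y L') else [:: y].

Lemma ins_perm y L : perm_eq (ins y L) (y :: L).
Proof.
elim: L => [|z L IH] //=; case: ifP => _ //.
apply: (@perm_trans _ (z :: y :: L)); first by rewrite perm_cons.
by rewrite -(cat1s y) -(cat1s z) perm_catCA.
Qed.

Lemma ins_path y L x : path ge x L -> y <= x -> path ge x (ins y L).
Proof.
elim: L x => [|z L IH] x /=; first by move=> _ ->.
move=> /andP[hzx hp] hyx; case: ifP => hzy /=.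
  by rewrite hyx hzy hp.
rewrite hzx /=; apply: IH => //.
by rewrite le_eqVlt; apply/orP; right; rewrite ltNge hzy.
Qed.

Lemma ins_sorted y L : sorted ge L -> sorted ge (ins y L).
Proof.
case: L => [|z L] //= hp; case: ifP => hzy /=; first by rewrite hzy hp.
apply: ins_path => //.
by rewrite le_eqVlt; apply/orP; right; rewrite ltNge hzy.
Qed.

Lemma geR_total : total ge. Proof. by move=> x y; rewrite orbC le_total. Qed.
Lemma geR_trans : transitive ge. Proof. by move=> x y z h1 h2; apply: le_trans h2 h1. Qed.
Lemma geR_anti : antisymmetric ge.
Proof. by move=> x y /andP[h1 h2]; apply/eqP; rewrite eq_le h1 h2. Qed.

Lemma sort_cons y l : sort ge (y :: l) = ins y (sort ge l).
Proof.
apply: (sorted_eq geR_trans geR_anti).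
- exact: (sort_sorted geR_total).
- apply: ins_sorted; exact: (sort_sorted geR_total).
rewrite perm_sort perm_sym (perm_trans (ins_perm _ _)) //.
by rewrite perm_cons perm_sort.
Qed.

Lemma ins_nth y L i :
  nth 0 (ins y L) i =
  if (i < find (fun x : R => (x <= y)%R) L)%N then nth 0 L i
  else if i == find (fun x : R => (x <= y)%R) L then y else nth 0 L i.-1.
Proof.
elim: L i => [|z L IH] i /=.
  by case: i => [|[|i]] //=; rewrite nth_nil.
case: ifP => hzy.
  by case: i => [|i] //=.
case: i => [|i] //=.
rewrite IH ltnS eqSS; case: ifP => // h1; case: ifP => // h2.
case: i h1 h2 => [|i] //=.
by case: (find _ L).
Qed.

End Lists.


Section Main.
Variables (R : realFieldType) (m k : nat) (f : assign m k -> R) (n : 'I_k -> nat)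
  (d : 'I_k -> R) (St : nat -> assign m k).
Hypothesis hrun : valid_run f n d St.
Hypothesis hd : forall a, 1 / 2 <= d a.
Hypothesis hn : forall a, (0 < n a)%N.

Local Notation w := (wt f St).
Local Notation bet X := (betaOf (wt f St) n d X).

Lemma part_upd (X : assign m k) x o c :
  part (upd X x o) c = if o == Some c then x |: part X c else part X c :\ x.
Proof.
apply/setP => y; rewrite /part.
case: ifP => /eqP ho; rewrite !inE ffunE; case: (y == x) => //=.
by rewrite ho eqxx.
by apply/eqP.
Qed.

Lemma step_cases (t : 'I_m) :
  (St t.+1 = St t) \/
  exists b, 0 <= w t b - bet (St t) b - minOther (bet (St t)) b /\
    (((#|part (St t) b| < n b)%N /\ St t.+1 = upd (St t) t (Some b)) \/
     ((n b <= #|part (St t) b|)%N /\ exists t', t' \in part (St t) b /\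
        (forall s, s \in part (St t) b -> w t' b <= w s b) /\
        St t.+1 = upd (upd (St t) t' None) t (Some b))).
Proof.
have := hrun.2 t; rewrite /step.
case=> [[_ ->]|[b [_ [hg H]]]]; [by left | right; exists b; split=> //].
Qed.


Lemma frame (t : 'I_m) x : x != t -> St t.+1 x = St t x \/ St t.+1 x = None.
Proof.
move=> hx; case: (step_cases t) => [->|[b [_ [[_ ->]|[_ [t' [_ [_ ->]]]]]]]]; [by left|..].
  by left; rewrite ffunE (negbTE hx).
rewrite !ffunE (negbTE hx); case: (x == t'); [by right | by left].
Qed.

Lemma ord_of (i : nat) : (i < m)%N -> {t : 'I_m | val t = i}.
Proof. by move=> h; exists (Ordinal h). Qed.

Lemma fresh (t : 'I_m) i : (i <= t)%N -> St i t = None.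
Proof.
elim: i => [|i IH] hi; first by rewrite hrun.1 ffunE.
have him : (i < m)%N by exact: ltn_trans hi (ltn_ord t).
have [t0 ht0] := ord_of _ him.
have hne : t != t0 by rewrite -val_eqE ht0 /= neq_ltn hi orbT.
have := frame t0 t hne; rewrite ht0 => -[->|->] //; exact: IH (ltnW hi).
Qed.

Lemma back (t : 'I_m) b i : (i <= m)%N -> St i t = Some b -> St t.+1 t = Some b.
Proof.
elim: i => [|i IH] hi; first by rewrite hrun.1 ffunE.
have [t0 ht0] := ord_of _ hi.
case: (eqVneq t t0) => [->|hne]; first by rewrite ht0.
have := frame t0 t hne; rewrite ht0 => -[->|->] // h; exact: IH (ltnW hi) h.
Qed.

Lemma everInE a (t : 'I_m) : (t \in everIn St a) = (St t.+1 t == Some a).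
Proof.
rewrite /everIn inE; apply/existsP/idP => [[i /eqP hi]|h].
  by apply/eqP; apply: (back _ _ i) hi; rewrite -ltnS; exact: ltn_ord.
have ht : (t.+1 < m.+1)%N by rewrite ltnS.
by exists (Ordinal ht).
Qed.


Lemma c_par_gt0 a : 0 < c_par n d a.
Proof.
have NR : 0 < (n a)%:R :> R by rewrite ltr0n.
have Dpos : 0 < d a by apply: lt_le_trans (hd a); lra.
have r1 : 1 < 1 + d a / (n a)%:R by rewrite ltrDl divr_gt0.
have E1 : 1 < (1 + d a / (n a)%:R) ^+ n a by rewrite exprn_egt1 // -lt0n.
rewrite /c_par divr_gt0 //; lra.
Qed.

Lemma g_par_ge0 a i : 0 <= g_par n d a i.
Proof.
have NR : 0 < (n a)%:R :> R by rewrite ltr0n.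
have Dpos : 0 < d a by apply: lt_le_trans (hd a); lra.
apply: mulr_ge0; first by apply: divr_ge0; [exact: ltW (c_par_gt0 a) | exact: ler0n].
apply: exprn_ge0; apply: addr_ge0; [lra | apply: divr_ge0; [lra | exact: ler0n]].
Qed.

Lemma beta_ge0 X b : (forall x, x \in part X b -> 0 <= w x b) -> 0 <= bet X b.
Proof.
move=> h; rewrite /betaOf; apply: sumr_ge0 => i _; apply: mulr_ge0; last exact: g_par_ge0.
set L := sort _ _.
case: (ltnP i (size L)) => hi; last by rewrite nth_default.
have := mem_nth 0 hi; rewrite mem_sort => /mapP[x hx ->]; apply: h; by rewrite -mem_enum.
Qed.

Lemma minOther_ge0 (bt : 'I_k -> R) a : (forall b, 0 <= bt b) -> 0 <= minOther bt a.
Proof.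
move=> h; rewrite /minOther /=.
set s := [seq _ | _ <- _].
have hs : forall x, x \in s -> 0 <= x by move=> x /mapP[b _ ->].
rewrite big_seq; apply: (big_ind (fun x => 0 <= x)).
- by move: hs; case: s => //= x s' hs; apply: hs; rewrite inE eqxx.
- by move=> x y hx hy; rewrite le_min hx hy.
exact: hs.
Qed.

Definition Inv (i : nat) : Prop := (forall b, (#|part (St i) b| <= n b)%N) /\
  (forall x b, St i x = Some b -> 0 <= w x b).

Lemma gain_bound (t : 'I_m) b : Inv t ->
  0 <= w t b - bet (St t) b - minOther (bet (St t)) b ->
  bet (St t) b <= w t b /\ 0 <= w t b.
Proof.
move=> [_ hI] hg.
have hb : forall c, 0 <= bet (St t) c.
  by move=> c; apply: beta_ge0 => x; rewrite inE => /eqP; apply: hI.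
have := minOther_ge0 _ b hb; have := hb b; lra.
Qed.


Lemma inv_all i : (i <= m)%N -> Inv i.
Proof.
elim: i => [|i IH] hi.
  split=> [b|x b]; rewrite hrun.1; last by rewrite ffunE.
  have -> : part (emptyA m k) b = set0 by apply/setP=> x; rewrite !inE ffunE.
  by rewrite cards0.
have [t0 ht0] := ord_of _ hi.
have IHi := IH (ltnW hi); rewrite -ht0 in IHi *.
rewrite /Inv.
case: (step_cases t0) => [->|[b [hg [[hlt ->]|[hge [t' [ht' [hmin ->]]]]]]]]; first exact: IHi.
  have [_ hw] := gain_bound _ _ IHi hg; split.
    move=> c; rewrite part_upd; case: eqP => [[<-]|_].
      rewrite cardsU1; apply: leq_trans (_ : _ <= 1 + #|part (St t0) b|)%N _.
        by rewrite leq_add2r leq_b1.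
      by rewrite add1n.
    exact: leq_trans (subset_leq_card (subsetDl _ _)) (IHi.1 c).
  move=> x c; rewrite ffunE; case: eqP => [-> [<-] //|_]; exact: IHi.2.
have [_ hw] := gain_bound _ _ IHi hg; split.
  move=> c; rewrite !part_upd /=; case: eqP => [[<-]|_].
    rewrite cardsU1; apply: leq_trans (_ : _ <= 1 + #|part (St t0) b :\ t'|)%N _.
      by rewrite leq_add2r leq_b1.
    by have := IHi.1 b; rewrite (cardsD1 t') ht'.
  apply: leq_trans (subset_leq_card (subsetDl _ _)) _.
  exact: leq_trans (subset_leq_card (subsetDl _ _)) (IHi.1 c).
move=> x c; rewrite !ffunE; case: eqP => [-> [<-] //|_].
case: eqP => // _; exact: IHi.2.
Qed.


Local Notation ge := (fun x y : R => y <= x).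

Definition betaL (a : 'I_k) (L : seq R) := \sum_(i < n a) nth 0 L i * g_par n d a i.

Lemma sort_perm (l1 l2 : seq R) : perm_eq l1 l2 -> sort ge l1 = sort ge l2.
Proof.
move=> h; apply: (sorted_eq (@geR_trans R) (@geR_anti R)); try exact: (sort_sorted (@geR_total R)).
by rewrite perm_sort perm_sym perm_sort perm_sym.
Qed.

Lemma sort_rcons_min (z : R) l0 : (forall u, u \in l0 -> z <= u) ->
  sort ge (z :: l0) = rcons (sort ge l0) z.
Proof.
move=> hz; apply: (sorted_eq (@geR_trans R) (@geR_anti R)).
- exact: (sort_sorted (@geR_total R)).
- have := sort_sorted (@geR_total R) l0.
  have hm : forall u, u \in sort ge l0 -> z <= u by move=> u; rewrite mem_sort; exact: hz.
  case: (sort ge l0) hm => [|h t] hm //= hs.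
  rewrite rcons_path hs /=; apply: hm; exact: mem_last.
by rewrite perm_sort perm_sym perm_rcons perm_cons perm_sort.
Qed.

Lemma step_notfull a (l : seq R) (y : R) :
  (size l < n a)%N -> betaL a (sort ge l) <= y ->
  2 * (n a)%:R * betaL a (sort ge (y :: l)) - (2 * (n a)%:R + 1) * betaL a (sort ge l)
    <= (Q_par n d a - 3) * y.
Proof.
move=> hs hb; rewrite sort_cons.
set L := sort ge l.
have hsL : size L = size l by rewrite size_sort.
have := @core_ineq R k n d a (nth 0 L) (nth 0 (ins _ y L)) y
  (find (fun x : R => (x <= y)%R) L) (hn a) (hd a).
rewrite /betaL in hb *.
have -> : nth 0 L (n a).-1 = 0 by rewrite nth_default // hsL -ltnS prednK.
rewrite mulr0 addr0; apply.
- by apply: leq_ltn_trans (find_size _ _) _; rewrite hsL.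
- by move=> i hi; have := before_find 0 hi; move/negbT; rewrite -ltNge => /ltW.
- by move=> i _; rewrite ins_nth.
- exact: hb.
Qed.

Lemma step_full a (l0 : seq R) (z y : R) :
  size l0 = (n a).-1 -> (forall u, u \in l0 -> z <= u) ->
  betaL a (sort ge (z :: l0)) <= y ->
  2 * (n a)%:R * betaL a (sort ge (y :: l0)) - (2 * (n a)%:R + 1) * betaL a (sort ge (z :: l0))
    + Q_par n d a * z <= (Q_par n d a - 3) * y.
Proof.
move=> hs hz hb; rewrite (sort_rcons_min _ _ hz) in hb; rewrite (sort_rcons_min _ _ hz) sort_cons.
set L0 := sort ge l0.
have hsL : size L0 = (n a).-1 by rewrite size_sort.
have hNa := hn a.
have := @core_ineq R k n d a (nth 0 (rcons L0 z)) (nth 0 (ins _ y L0)) y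
  (find (fun x : R => (x <= y)%R) L0) (hn a) (hd a).
rewrite /betaL in hb *.
have -> : nth 0 (rcons L0 z) (n a).-1 = z by rewrite nth_rcons hsL ltnn eqxx.
apply.
- apply: leq_ltn_trans (find_size _ _) _; rewrite hsL; by case: (n a) hNa.
- move=> i hi; have hi' : (i < size L0)%N by apply: leq_trans hi (find_size _ _).
  rewrite nth_rcons hi'.
  by have := before_find 0 hi; move/negbT; rewrite -ltNge => /ltW.
- move=> i hi; rewrite ins_nth !nth_rcons.
  case: ifP => h1.
    by rewrite (leq_trans h1 (find_size _ _)).
  case: ifP => // h2.
  have : (i.-1 < size L0)%N.
    rewrite hsL; case: i hi h1 h2 => [|i] hi h1 h2 /=.
      by move: h1 h2; case: (find _ _).
    by case: (n a) hi hNa.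
  by move=> ->.
- exact: hb.
Qed.


Lemma enum_U1 (A : {set 'I_m}) x : x \notin A -> perm_eq (enum (x |: A)) (x :: enum A).
Proof.
move=> hx; apply: uniq_perm; first exact: enum_uniq.
  by rewrite /= mem_enum hx enum_uniq.
by move=> y; rewrite in_cons !mem_enum in_setU1.
Qed.

Lemma betaE X b : bet X b = betaL b (sort ge [seq w s b | s <- enum (part X b)]).
Proof. by []. Qed.

Lemma betaP X Y b : part X b = part Y b -> bet X b = bet Y b.
Proof. by rewrite !betaE => ->. Qed.

Lemma sum_split (F : 'I_m -> R) (A : pred 'I_m) (t0 : 'I_m) :
  \sum_(t : 'I_m | (t < t0.+1)%N && A t) F t =
  \sum_(t : 'I_m | (t < t0)%N && A t) F t + (if A t0 then F t0 else 0).
Proof.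
case: ifP => hA.
  rewrite (bigD1 t0) /=; last by rewrite ltnSn hA.
  rewrite addrC; congr (_ + _); apply: eq_bigl => t /=.
  case: (eqVneq t t0) => [->|hne]; first by rewrite ltnn /= !andbF.
  by rewrite /= andbT ltnS leq_eqVlt val_eqE (negbTE hne).
rewrite addr0; apply: eq_bigl => t /=.
case: (eqVneq t t0) => [->|hne]; first by rewrite hA ltnn !andbF.
by rewrite ltnS leq_eqVlt val_eqE (negbTE hne).
Qed.

Definition Pinv a i := \sum_(t : 'I_m | (t < i)%N && (St t.+1 t == Some a))
    (3 * w t a - bet (St t) a) + 2 * (n a)%:R * bet (St i) a
  <= Q_par n d a * \sum_(t in part (St i) a) w t a.

Lemma setD1_notin (A : {set 'I_m}) x : x \notin A -> A :\ x = A.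
Proof.
move=> hx; apply/setP => y; rewrite !inE; case: eqP => // ->.
by rewrite (negbTE hx).
Qed.

Lemma P_all a i : (i <= m)%N -> Pinv a i.
Proof.
elim: i => [|i IH] hi.
  rewrite /Pinv hrun.1 big_pred0; last by move=> t; rewrite ltn0.
  rewrite betaE.
  have -> : part (emptyA m k) a = set0 by apply/setP=> x; rewrite !inE ffunE.
  rewrite big_set0 /betaL big1 ?mulr0 ?addr0 //.
  move=> j _; rewrite nth_default ?mul0r //.
  by rewrite size_sort size_map -cardE cards0.
have [t0 ht0] := ord_of _ hi.
have IHi := IH (ltnW hi); rewrite -ht0 in IHi *.
have hI : Inv t0 by apply: inv_all; rewrite ht0 ltnW.
have hfr : St t0 t0 = None := fresh t0 t0 (leqnn _).
have hnot : forall c, t0 \notin part (St t0) c by move=> c; rewrite inE hfr.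
rewrite /Pinv in IHi *; rewrite sum_split.
case: (step_cases t0) => [hS|[b [hg [[hlt hS]|[hge [t' [ht' [hmin hS]]]]]]]]; rewrite hS.
- by rewrite hfr /= addr0.
- have [hby hy] := gain_bound _ _ hI hg.
  rewrite ffunE eqxx.
  case: (eqVneq b a) => [hba|hba].
    subst b; rewrite eqxx (betaE (upd _ _ _)) part_upd eqxx (big_setU1 _ (hnot a)) /=.
    rewrite (sort_perm _ _ (perm_map (fun s => w s a) (enum_U1 _ _ (hnot a)))) /=.
    have hsz : (size [seq w s a | s <- enum (part (St t0) a)] < n a)%N by rewrite size_map -cardE.
    have := step_notfull _ _ _ hsz; rewrite -betaE => /(_ _ hby).
    move: IHi; lra.
  have e : (Some b == Some a) = false by apply/eqP => -[hb]; rewrite hb eqxx in hba.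
  have hp : part (upd (St t0) t0 (Some b)) a = part (St t0) a.
    by rewrite part_upd e setD1_notin.
  by rewrite e addr0 (betaP _ _ _ hp) hp.
- have [hby hy] := gain_bound _ _ hI hg.
  rewrite !ffunE eqxx.
  have hpu : forall c, part (upd (St t0) t' None) c = part (St t0) c :\ t'.
    by move=> c; rewrite part_upd.
  case: (eqVneq b a) => [hba|hba].
    subst b; rewrite eqxx (betaE (upd _ _ _)) part_upd eqxx hpu.
    set A := part (St t0) a.
    have hnA : t0 \notin A :\ t' by rewrite inE negb_and hnot orbT.
    rewrite (big_setU1 _ hnA) /=.
    rewrite (sort_perm _ _ (perm_map (fun s => w s a) (enum_U1 _ _ hnA))) /=.
    have hA : A = t' |: A :\ t' by rewrite setD1K.
    have hnA' : t' \notin A :\ t' by rewrite in_setD1 eqxx.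
    have es : \sum_(t in A) w t a = w t' a + \sum_(t in A :\ t') w t a by rewrite (big_setD1 _ ht').
    have eb : bet (St t0) a = betaL a (sort ge (w t' a :: [seq w s a | s <- enum (A :\ t')])).
      rewrite betaE -/A {1}hA.
      by rewrite (sort_perm _ _ (perm_map (fun s => w s a) (enum_U1 _ _ hnA'))).
    rewrite eb in hby.
    have hcA : #|A| = n a by apply/eqP; rewrite eqn_leq hge hI.1.
    have hsz : size [seq w s a | s <- enum (A :\ t')] = (n a).-1.
      by rewrite size_map -cardE -hcA (cardsD1 t' A) ht'.
    have hz : forall u, u \in [seq w s a | s <- enum (A :\ t')] -> w t' a <= u.
      move=> u /mapP[s hs ->]; apply: hmin; move: hs; rewrite mem_enum inE => /andP[_ ->].
      done.
    have := step_full _ _ _ _ hsz hz hby.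
    move: IHi; rewrite -/A es eb; lra.
  have e : (Some b == Some a) = false by apply/eqP => -[hb]; rewrite hb eqxx in hba.
  have ht'a : t' \notin part (St t0) a.
    move: ht'; rewrite !inE => /eqP ->; by rewrite e.
  have hp : part (upd (upd (St t0) t' None) t0 (Some b)) a = part (St t0) a.
    by rewrite part_upd e hpu !setD1_notin.
  by rewrite e addr0 (betaP _ _ _ hp) hp.
Qed.


Lemma final a : \sum_(t in everIn St a) (3 * w t a - bet (St (val t)) a)
    + 2 * (n a)%:R * bet (St m) a <= Q_par n d a * \sum_(t in part (St m) a) w t a.
Proof.
have := P_all a m (leqnn m); rewrite /Pinv.
suff -> : \sum_(t in everIn St a) (3 * w t a - bet (St (val t)) a) =
  \sum_(t : 'I_m | (t < m)%N && (St t.+1 t == Some a)) (3 * w t a - bet (St t) a) by [].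
by apply: eq_bigl => t; rewrite everInE ltn_ord.
Qed.

End Main.

Theorem mainTheorem9 (R : realFieldType) (m k : nat)
  (f : assign m k -> R) (n : 'I_k -> nat) (d : 'I_k -> R)
  (St : nat -> assign m k) :
  (2 <= k)%N ->
  (forall X, 0 <= f X) ->
  k_submodular f ->
  (forall a, (0 < n a)%N) ->
  (forall a, 1 / 2 <= d a) ->
  valid_run f n d St ->
  forall a : 'I_k,
    \sum_(t in everIn St a)
        (3 * wt f St t a - betaOf (wt f St) n d (St (val t)) a)
      + 2 * (n a)%:R * betaOf (wt f St) n d (St m) a
    <= Q_par n d a * \sum_(t in part (St m) a) wt f St t a.
Proof.
move=> _ _ _ hn hd hrun a.
exact: final hrun hd hn a.
Qed.
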